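(* Let $H=(V,E)$ be a finite simple graph, let $M$ be a maximum $2$-matching of $H$, let $v_0$ be a singleton of $M$, and let $v_0,v_1,\dots,v_{2i+2}$ be an A-alternating path saving $v_0$. Define $$M'=\bigl(M\setminus\{v_{2j+1}v_{2j+2}: 0\le j\le i\}\bigr)\cup\{v_{2j}v_{2j+1}: 0\le j\le i\}.$$ Then $M'$ is a maximum $2$-matching of $H$, and $M'$ has exactly one fewer singleton than $M$.
   Context: A $2$-matching of $H$ is a set $M\subseteq E$ in which every vertex is incident to at most two edges of $M$. It is maximum if $|M|$ is as large as possible. The components of $(V,M)$ are paths and cycles. A single vertex counts as a $0$-path, and a $k$-path has $k$ edges. A singleton of $M$ is a vertex of degree $0$ in $M$. Given a maximum $2$-matching $M$ and a singleton $v_0$ of $M$, an A-alternating path saving $v_0$ is a sequence of pairwise distinct vertices $v_0,v_1,\dots,v_{2i+2}$, with $i\ge 0$, satisfying: (1) $v_{2j}v_{2j+1}\in E\setminus M$ for every $j=0,\dots,i$; (2) for every $j=1,\dots,i$ there is a component $P_j$ of $(V,M)$ that is a $2$-path, with $v_{2j-1}$ its middle vertex and $v_{2j}$ one of its two endpoints, and $P_1,\dots,P_i$ are pairwise distinct; (3) $v_{2i+1}$ lies on a component $Q$ of $(V,M)$ that is either a cycle or a path with at least $3$ edges, $v_{2i+1}v_{2i+2}\in M$, and if $Q$ is a path then $v_{2i+2}$ is not an endpoint of $Q$. *)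

(* Defs.v *)
From mathcomp Require Import all_boot.
Set Implicit Arguments. Unset Strict Implicit. Unset Printing Implicit Defensive.

Section Defs.
Variable T : finType.

(* A finite simple graph H = (T, g): g symmetric and irreflexive. Edges are
   2-element vertex sets. *)
Definition edges (g : rel T) : {set {set T}} :=
  [set [set x; y] | x in T, y in T & g x y].

Definition mdeg (M : {set {set T}}) (v : T) : nat := #|[set e in M | v \in e]|.

Definition two_matching (g : rel T) (M : {set {set T}}) : Prop :=
  M \subset edges g /\ forall v, mdeg M v <= 2.

Definition max_two_matching (g : rel T) (M : {set {set T}}) : Prop :=
  two_matching g M /\ forall M', two_matching g M' -> #|M'| <= #|M|.

Definition singleton (M : {set {set T}}) (v : T) : bool := mdeg M v == 0.

Definition singletons (M : {set {set T}}) : {set T} := [set v | singleton M v].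

Definition madj (M : {set {set T}}) : rel T := fun x y => [set x; y] \in M.

Definition is_comp (M : {set {set T}}) (C : {set T}) : Prop :=
  exists v, C = [set u | connect (madj M) v u].

Definition in_edges (M : {set {set T}}) (C : {set T}) : {set {set T}} :=
  [set e in M | e \subset C].

(* The component C is the path x, s_1, ..., s_k (a k-path with k = size s);
   its endpoints are x and last x s. *)
Definition path_of (M : {set {set T}}) (C : {set T}) (x : T) (s : seq T) : bool :=
  [&& uniq (x :: s), [set u in x :: s] == C &
      in_edges M C == [set [set p.1; p.2] | p in zip (x :: s) s]].

Definition cycle_of (M : {set {set T}}) (C : {set T}) (s : seq T) : bool :=
  [&& uniq s, 3 <= size s, [set u in s] == C &
      in_edges M C == [set [set p.1; p.2] | p in zip s (rot 1 s)]].

Definition A_alt_path (g : rel T) (M : {set {set T}}) (v0 : T) (i : nat)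
    (vs : nat -> T) : Prop :=
  vs 0 = v0 /\
  {in [pred k | k <= 2 * i + 2] &, injective vs} /\
  (forall j, j <= i ->
     [set vs (2 * j); vs (2 * j + 1)] \in edges g :\: M) /\
  (exists P : nat -> {set T},
     (forall j, 1 <= j <= i ->
        is_comp M (P j) /\
        exists x y, path_of M (P j) x [:: vs (2 * j - 1); y] /\
                    (vs (2 * j) = x \/ vs (2 * j) = y)) /\
     (forall j j', 1 <= j <= i -> 1 <= j' <= i -> j <> j' -> P j <> P j')) /\
  (exists Q : {set T},
     is_comp M Q /\ vs (2 * i + 1) \in Q /\
     [set vs (2 * i + 1); vs (2 * i + 2)] \in M /\
     ((exists s, cycle_of M Q s) \/
      (exists x s, path_of M Q x s /\ 3 <= size s)) /\
     (forall x s, path_of M Q x s ->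
        vs (2 * i + 2) <> x /\ vs (2 * i + 2) <> last x s)).

Definition switch (M : {set {set T}}) (i : nat) (vs : nat -> T) : {set {set T}} :=
  (M :\: [set [set vs (2 * j + 1); vs (2 * j + 2)] | j : 'I_i.+1])
  :|: [set [set vs (2 * j); vs (2 * j + 1)] | j : 'I_i.+1].

End Defs.

(* Main.v *)
Require Import Defs.
From mathcomp Require Import all_boot zify.
Set Implicit Arguments. Unset Strict Implicit. Unset Printing Implicit Defensive.

Lemma deg2 (T : finType) (M : {set {set T}}) (w a b : T) :
  a != b -> [set w; a] \in M -> [set w; b] \in M -> 2 <= mdeg M w.
Proof.
move=> ab Ha Hb; rewrite /mdeg.
have <- : #|[set [set w; a]; [set w; b]]| = 2.
  rewrite cards2; case: eqP => // E.
  have : a \in [set w; b] by rewrite -E !inE eqxx orbT.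
  have : b \in [set w; a] by rewrite E !inE eqxx orbT.
  rewrite !inE => /orP [/eqP bw|/eqP ba] /orP [/eqP aw|/eqP ab'].
  - by rewrite aw bw eqxx in ab.
  - by rewrite ab' eqxx in ab.
  - by rewrite ba eqxx in ab.
  - by rewrite ab' eqxx in ab.
apply: subset_leq_card; apply/subsetP => e; rewrite !inE => /orP [] /eqP ->;
  by rewrite ?Ha ?Hb !inE eqxx.
Qed.

Lemma in_edges_sub (T : finType) (M : {set {set T}}) C e : e \in in_edges M C -> e \in M.
Proof. by rewrite inE => /andP []. Qed.

Lemma path_deg (T : finType) (M : {set {set T}}) C x s w :
  path_of M C x s -> w \in C -> w != x -> w != last x s -> 2 <= mdeg M w.
Proof.
case/and3P => U /eqP HC /eqP HE wC wx wl.
have wt : w \in x :: s by move: wC; rewrite -HC inE.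
set t := x :: s in U wt.
have pairj : forall j, j < size s -> [set nth x t j; nth x t j.+1] \in M.
  move=> j js; apply: (@in_edges_sub _ _ C); rewrite HE.
  apply/imsetP; exists (nth x t j, nth x s j) => //.
  have := @mem_nth _ (x, x) (zip t s) j; rewrite nth_zip_cond size_zip /t /=.
  have -> : j < minn (size s).+1 (size s) by lia. by apply.
set k := index w t.
have kt : k < size t by rewrite index_mem.
have wk : nth x t k = w by rewrite nth_index.
have k0 : 0 < k by case: (posnP k) wk => // ->; rewrite /t /= => E; rewrite E eqxx in wx.
have ks : k < size s.
  rewrite ltn_neqAle -ltnS kt andbT; apply/eqP => E.
  have Hl : nth x t (size s) = last x s by apply: (nth_last x t).
  by move: wk; rewrite E Hl => E'; rewrite E' eqxx in wl.
apply: (@deg2 _ _ _ (nth x t k.-1) (nth x t k.+1)).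
- rewrite nth_uniq // /t /=; lia.
- have := pairj k.-1 ltac:(lia). rewrite prednK // wk setUC. done.
- by have := pairj k ks; rewrite wk.
Qed.

Definition nxtc (n j : nat) := if j.+1 < n then j.+1 else 0.

Lemma cycle_deg (T : finType) (M : {set {set T}}) C s w :
  cycle_of M C s -> w \in C -> 2 <= mdeg M w.
Proof.
case/and4P => U n3 /eqP HC /eqP HE wC.
have ws : w \in s by move: wC; rewrite -HC inE.
have rotE : forall j, j < size s ->
    nth w (rot 1 s) j = nth w s (if j.+1 < size s then j.+1 else 0).
  case: (s) => [|a s'] //= j jn.
  rewrite rot1_cons nth_rcons /=.
  case: ltnP => H1; first by rewrite ltnS H1.
  have -> : j = size s' by lia.
  by rewrite eqxx ltnn.
have pairj : forall j, j < size s -> [set nth w s j; nth w s (nxtc (size s) j)] \in M.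
  move=> j jn; apply: (@in_edges_sub _ _ C); rewrite HE.
  apply/imsetP; exists (nth w s j, nth w (rot 1 s) j) => /=.
    have := @mem_nth _ (w, w) (zip s (rot 1 s)) j.
    by rewrite nth_zip ?size_rot // size_zip size_rot minnn; apply.
  by rewrite rotE.
set k := index w s.
have kn : k < size s by rewrite index_mem.
have wk : nth w s k = w by rewrite nth_index.
clearbody k.
move Hn : (size s) => n in n3 kn pairj *.
have Hn' : size s = n by [].
have Hn2 : forall j, j < n -> j < size s by move=> j; rewrite Hn'.
case: (posnP k) => k0.
- rewrite k0 in wk.
  apply: (@deg2 _ _ _ (nth w s 1) (nth w s n.-1)).
  + rewrite nth_uniq //. 1: lia. exact: (Hn2 1 ltac:(lia)). exact: (Hn2 n.-1 ltac:(lia)).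
  + have E1 : nxtc n 0 = 1 by rewrite /nxtc; case: ltnP => //; lia.
    by have := pairj 0 ltac:(lia); rewrite E1 wk.
  + have E1 : nxtc n n.-1 = 0 by rewrite /nxtc; case: ltnP => //; lia.
    by have := pairj n.-1 ltac:(lia); rewrite E1 wk setUC.
- apply: (@deg2 _ _ _ (nth w s k.-1) (nth w s (nxtc n k))).
  + have Hnx : nxtc n k < n by rewrite /nxtc; case: (ltnP k.+1 n) => H; lia.
    rewrite nth_uniq //. 1: (rewrite /nxtc; case: (ltnP k.+1 n) => H; lia). exact: (Hn2 k.-1 ltac:(lia)). exact: (Hn2 _ Hnx).
  + have E1 : nxtc n k.-1 = k by rewrite /nxtc; case: ltnP => //; lia.
    by have := pairj k.-1 ltac:(lia); rewrite E1 wk setUC.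
  + by have := pairj k kn; rewrite wk.
Qed.

Theorem mainTheorem2 (T : finType) (g : rel T) (M : {set {set T}}) (v0 : T)
    (i : nat) (vs : nat -> T) :
  symmetric g -> irreflexive g ->
  max_two_matching g M -> singleton M v0 -> A_alt_path g M v0 i vs ->
  max_two_matching g (switch M i vs) /\
  #|singletons (switch M i vs)| + 1 = #|singletons M|.
Proof.
move=> gsym girr [[Msub Mdeg] Mmax] sv0
  [vs0 [inj [Aok [[P [HP HPd]] [Q [Qc [uQ [uwM [Qshape Qend]]]]]]]]].
have injk : forall a b, a <= 2*i+2 -> b <= 2*i+2 -> vs a = vs b -> a = b.
  by move=> a b Ha Hb; apply: inj; rewrite inE.
have Rm : forall j, j <= i -> [set vs (2*j+1); vs (2*j+2)] \in M.
  move=> j ji; case: (ltnP j i) => [jlt|jge]; last first.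
    by have -> : j = i by lia.
  have [_ [x [y [Hp Hx]]]] := HP j.+1 ltac:(lia).
  have E1 : 2 * j.+1 - 1 = 2*j+1 by lia.
  have E2 : 2 * j.+1 = 2*j+2 by lia.
  rewrite E1 E2 in Hp Hx.
  case/and3P: Hp => _ _ /eqP HE.
  case: Hx => ->; apply: (@in_edges_sub _ _ (P j.+1)); rewrite HE.
    apply/imsetP; exists (x, vs (2*j+1)); first by rewrite /= inE eqxx.
    by rewrite setUC.
  apply/imsetP; exists (vs (2*j+1), y) => //.
  by rewrite /= !inE eqxx orbT.
pose R := [set [set vs (2*j+1); vs (2*j+2)] | j : 'I_i.+1].
pose A := [set [set vs (2*j); vs (2*j+1)] | j : 'I_i.+1].
have swE : switch M i vs = (M :\: R) :|: A by [].
have RM : forall e, e \in R -> e \in M.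
  by move=> e /imsetP [j _ ->]; apply: Rm; have := ltn_ord j; lia.
have AnM : forall e, e \in A -> e \notin M.
  move=> e /imsetP [j _ ->]; have := Aok j ltac:(have := ltn_ord j; lia).
  by rewrite inE => /andP [].
have Ag : forall e, e \in A -> e \in edges g.
  move=> e /imsetP [j _ ->]; have := Aok j ltac:(have := ltn_ord j; lia).
  by rewrite inE => /andP [].
have cardA : #|A| = i.+1.
  rewrite card_imset ?card_ord // => j1 j2 /setP /(_ (vs (2*j1))).
  rewrite !inE eqxx /= => /esym /orP [] /eqP E; apply: val_inj => /=.
  - have := injk (2*j1) (2*j2) ltac:(have := ltn_ord j1; lia) ltac:(have := ltn_ord j2; lia) E; lia.
  - have := injk (2*j1) (2*j2+1) ltac:(have := ltn_ord j1; lia) ltac:(have := ltn_ord j2; lia) E; lia.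
have cardR : #|R| <= i.+1 by rewrite -[i.+1]card_ord leq_imset_card.
have cardM' : #|M| <= #|switch M i vs|.
  rewrite swE cardsU cardsD.
  have -> : (M :\: R) :&: A = set0.
    apply/setP => e; rewrite !inE; apply/negP => /andP [/andP [_ eM] eA].
    by move: (AnM e eA); rewrite eM.
  rewrite cards0 subn0.
  have := leq_trans (subset_leq_card (subsetIr M R)) cardR.
  rewrite cardA; move: #|M| #|M :&: R| => a b; lia.
have Rin : forall k, 1 <= k <= 2*i+2 -> exists2 e, e \in R & vs k \in e.
  move=> k Hk; pose j : 'I_i.+1 := inord ((k.-1) %/ 2).
  have jv : (j : nat) = (k.-1) %/ 2 by rewrite inordK //; lia.
  exists [set vs (2*j+1); vs (2*j+2)]; first exact: imset_f.
  have : k = 2*j+1 \/ k = 2*j+2 by rewrite jv; lia.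
  by case=> {1}->; rewrite !inE eqxx ?orbT.
have Ain : forall k, k <= 2*i+1 -> exists2 e, e \in A & vs k \in e.
  move=> k Hk; pose j : 'I_i.+1 := inord (k %/ 2).
  have jv : (j : nat) = k %/ 2 by rewrite inordK //; lia.
  exists [set vs (2*j); vs (2*j+1)]; first exact: imset_f.
  have : k = 2*j \/ k = 2*j+1 by rewrite jv; lia.
  by case=> {1}->; rewrite !inE eqxx ?orbT.
have Aone : forall v, #|[set e in A | v \in e]| <= 1.
  move=> v; apply/card_le1_eqP => e1 e2; rewrite !inE.
  move=> /andP [/imsetP [j1 _ ->] H1] /andP [/imsetP [j2 _ ->] H2].
  have o1 := ltn_ord j1; have o2 := ltn_ord j2.
  suff : j1 = j2 by move=> ->.
  apply: val_inj => /=; move: H1 H2; rewrite !inE.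
  case/orP => /eqP -> /orP [] /eqP E.
  - by have := injk (2*j1) (2*j2) ltac:(lia) ltac:(lia) E; lia.
  - by have := injk (2*j1) (2*j2+1) ltac:(lia) ltac:(lia) E; lia.
  - by have := injk (2*j1+1) (2*j2) ltac:(lia) ltac:(lia) E; lia.
  - by have := injk (2*j1+1) (2*j2+1) ltac:(lia) ltac:(lia) E; lia.
have Rlast : forall e, e \in R -> vs (2*i+2) \in e ->
    e = [set vs (2*i+1); vs (2*i+2)].
  move=> e /imsetP [j _ ->]; have o := ltn_ord j.
  rewrite !inE => /orP [] /eqP E.
  - by have := injk (2*i+2) (2*j+1) ltac:(lia) ltac:(lia) E; lia.
  - by have := injk (2*i+2) (2*j+2) ltac:(lia) ltac:(lia) E => ?; have -> : (j : nat) = i by lia.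
have decomp : forall v, [set e in switch M i vs | v \in e] =
    ([set e in M | v \in e] :\: R) :|: [set e in A | v \in e].
  by move=> v; apply/setP => e; rewrite swE !inE; case: (v \in e); rewrite ?andbF ?andbT.
have notpath : forall v, (forall k, k <= 2*i+2 -> vs k != v) ->
    [set e in switch M i vs | v \in e] = [set e in M | v \in e].
  move=> v Hv; apply/setP => e; rewrite swE !inE.
  case ve: (v \in e); rewrite ?andbF ?andbT //.
  have nR : e \notin R.
    apply/negP => /imsetP [j _ E]; move: ve; rewrite E !inE; have o := ltn_ord j.
    by case/orP => /eqP E'; [move: (Hv (2*j+1) ltac:(lia)) | move: (Hv (2*j+2) ltac:(lia))];
      rewrite E' eqxx.
  have nA : e \notin A.
    apply/negP => /imsetP [j _ E]; move: ve; rewrite E !inE; have o := ltn_ord j.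
    by case/orP => /eqP E'; [move: (Hv (2*j) ltac:(lia)) | move: (Hv (2*j+1) ltac:(lia))];
      rewrite E' eqxx.
  by rewrite (negbTE nR) (negbTE nA) orbF.
have v0E : vs 0 = v0 by [].
have wdeg : 2 <= mdeg M (vs (2*i+2)).
  have wQ : vs (2*i+2) \in Q.
    case: Qc => v' QE; move: uQ; rewrite QE !inE => Hc.
    apply: (connect_trans Hc); apply: connect1; exact: uwM.
  case: Qshape => [[s Hs] | [x [s [Hs _]]]]; first exact: cycle_deg Hs wQ.
  have [H1 H2] := Qend x s Hs.
  by apply: (path_deg Hs wQ); apply/eqP.
have nonep : forall v, (forall k : 'I_(2*i+3), (vs k == v) = false) ->
    forall k, k <= 2*i+2 -> vs k != v.
  move=> v none k kb; have := none (@Ordinal (2*i+3) k ltac:(lia)).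
  by move=> /= ->.
have degb : forall v, mdeg (switch M i vs) v <= 2.
  move=> v; case: (pickP (fun k : 'I_(2*i+3) => vs k == v)) => [k /eqP vk | none];
    last by rewrite /mdeg notpath; [exact: Mdeg | exact: nonep v none].
  rewrite /mdeg decomp cardsU; apply: leq_trans (leq_subr _ _) _.
  have ok := ltn_ord k.
  case: (posnP k) => k0.
  - have -> : [set e in M | v \in e] = set0.
      apply: cards0_eq; apply/eqP; move: sv0; rewrite /singleton /mdeg -vk k0 vs0 //.
    by rewrite set0D cards0 add0n; apply: leq_trans (Aone v) _.
  - have [e0 e0R ve0] := Rin k ltac:(lia).
    apply: (@leq_trans (1 + 1)); last by []; apply: leq_add; last exact: Aone v.
    apply: leq_trans (subset_leq_card (_ : _ \subset [set e in M | v \in e] :\ e0)) _.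
      apply/subsetP => e; rewrite !inE => /andP [eR ->]; rewrite andbT.
      by apply: contraNneq eR => ->.
    rewrite vk in ve0; have := cardsD1 e0 [set e in M | v \in e]; rewrite inE RM // ve0 /=.
    have := Mdeg v; rewrite /mdeg. move: #|[set e in M | v \in e]| => a.
    move: #|[set e in M | v \in e] :\ e0| => b. lia.
have sE : singletons (switch M i vs) = singletons M :\ v0.
  apply/setP => v; rewrite !inE /singleton /mdeg.
  case: (pickP (fun k : 'I_(2*i+3) => vs k == v)) => [k /eqP vk | none]; last first.
    have vv0 : v != v0 by rewrite -vs0 eq_sym; apply: (nonep v none 0).
    by rewrite notpath ?vv0 //; exact: nonep v none.
  have ok := ltn_ord k.
  have -> : (v != v0) && (#|[set e in M | v \in e]| == 0) = false.
    case: (posnP k) => k0; first by rewrite -vk k0 vs0 eqxx.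
    have [e0 e0R ve0] := Rin k ltac:(lia).
    apply/negbTE; rewrite negb_and; apply/orP; right.
    by rewrite cards_eq0; apply/set0Pn; exists e0; rewrite inE RM // -vk ve0.
  apply/negbTE; rewrite cards_eq0; apply/set0Pn.
  case: (leqP k (2*i+1)) => kb.
    have [e eA ve] := Ain k kb; exists e; rewrite inE swE !inE eA orbT -vk ve //.
  have kE : (k:nat) = 2*i+2 by lia.
  pose e0 := [set vs (2*i+1); vs (2*i+2)].
  have wd := wdeg; rewrite /mdeg -kE vk in wd.
  have HD := cardsD1 e0 [set e in M | v \in e].
  have Hb := leq_b1 (e0 \in [set e in M | v \in e]).
  have : 0 < #|[set e in M | v \in e] :\ e0|.
    move: wd Hb HD; move: #|[set e in M | v \in e]| (nat_of_bool _) => a b.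
    move: #|[set e in M | v \in e] :\ e0| => c; lia.
  case/card_gt0P => e; rewrite !inE => /andP [ne0 /andP [eM ve]].
  exists e; rewrite inE swE !inE ve eM /= ?andbT.
  suff -> : e \notin R by [].
  apply/negP => eR.
  have := Rlast e eR; rewrite -kE vk => /(_ ve) E.
  by move: ne0; rewrite E /e0 -kE vk eqxx.
split; first split; first split.
- rewrite swE; apply/subsetP => e; rewrite !inE => /orP [/andP [_ eM] | eA].
    exact: (subsetP Msub).
  exact: Ag.
- exact: degb.
- by move=> M'' HM''; apply: leq_trans (Mmax _ HM'') cardM'.
rewrite sE; have := cardsD1 v0 (singletons M); rewrite inE sv0 /=.
move: #|singletons M| #|singletons M :\ v0| => a b; lia.
Qed.
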